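(* Let $G$ be a graph of order $n$ with at least one edge, minimum degree $\delta$, and $\mu(G)=\mu$. If $(x_1,\ldots,x_n)$ is a unit eigenvector of the adjacency matrix of $G$ for the eigenvalue $\mu$, then \[ \min\{x_1,\ldots,x_n\}\leq\sqrt{\frac{\delta}{\mu^{2}+\delta n-\delta^{2}}}. \]
   Context: Graphs are finite and simple. $\mu(G)$ denotes the largest eigenvalue of the adjacency matrix of $G$. A unit eigenvector is one of Euclidean norm 1. *)

(* Defs.v *)
From mathcomp Require Import all_boot all_order all_algebra.
Set Implicit Arguments. Unset Strict Implicit. Unset Printing Implicit Defensive.
Import Order.TTheory GRing.Theory Num.Theory.
Local Open Scope ring_scope.

Definition simple_graph (n : nat) (e : rel 'I_n) : Prop :=
  (forall i j, e i j = e j i) /\ (forall i, ~~ e i i).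

Definition deg (n : nat) (e : rel 'I_n) (i : 'I_n) : nat := #|[set j | e i j]|.

Definition adjmx (R : nzRingType) (n : nat) (e : rel 'I_n) : 'M[R]_n :=
  \matrix_(i, j) (e i j)%:R.

Definition largest_eigenvalue (R : realFieldType) (n : nat) (A : 'M[R]_n) (mu : R) : Prop :=
  eigenvalue A mu /\ (forall a, eigenvalue A a -> a <= mu).

(* Main.v *)
Require Import Defs.
From mathcomp Require Import all_boot all_order all_algebra.
From mathcomp Require Import ring lra zify.
Import Order.TTheory GRing.Theory Num.Theory.
Local Open Scope ring_scope.
Lemma cs (R : realFieldType) (I : finType) (P : pred I) (f : I -> R) :
  (\sum_(i in P) f i) ^+ 2 <= #|P|%:R * \sum_(i in P) f i ^+ 2.
Proof.
set k : R := #|P|%:R; set S1 := \sum_(i in P) f i; set S2 := \sum_(i in P) f i ^+ 2.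
have H0 : 0 <= \sum_(i in P) (k * f i - S1) ^+ 2 by apply: sumr_ge0 => i _; exact: sqr_ge0.
have E : \sum_(i in P) (k * f i - S1) ^+ 2 = k ^+ 2 * S2 - (2 * k * S1) * S1 + S1 ^+ 2 * k.
  have Ei : forall i, (k * f i - S1) ^+ 2 = (k ^+ 2 * f i ^+ 2 - (2 * k * S1) * f i) + S1 ^+ 2 by move=> i; ring.
  rewrite (eq_bigr _ (fun i _ => Ei i)) big_split /= sumrB sumr_const -!mulr_sumr.
  by rewrite -[S1 ^+ 2 *+ _]mulr_natr.
rewrite E in H0.
have [k0|kp] := eqVneq #|P| 0%N.
  by rewrite /S1 /k k0 (big_pred0 _ _ _ _ (card0_eq k0)) expr0n mul0r.
have kp' : 0 < k by rewrite /k ltr0n lt0n.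
have : 0 <= k * (k * S2 - S1 ^+ 2) by nra.
rewrite pmulr_rge0 // subr_ge0 //.
Qed.

Theorem lemma1 (R : rcfType) (n : nat) (e : rel 'I_n)
  (delta : nat) (mu : R) (x : 'rV[R]_n) (m : R) :
  simple_graph e ->
  (exists i j, e i j) ->
  (exists i, deg e i = delta) -> (forall i, (delta <= deg e i)%N) ->
  largest_eigenvalue (adjmx R e) mu ->
  x *m adjmx R e = mu *: x ->
  \sum_(i < n) x 0 i ^+ 2 = 1 ->
  (exists i, x 0 i = m) -> (forall i, m <= x 0 i) ->
  m <= Num.sqrt (delta%:R / (mu ^+ 2 + (delta * n)%:R - (delta ^ 2)%:R)).
Proof.
move=> [esym eirr] [i0 [j0 e0]] [u du] hdeg _ hx hnorm [im him] hm.
have [m0|mpos] := lerP m 0.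
  exact: le_trans m0 (sqrtr_ge0 _).
have hpos : forall i, 0 < x 0 i by move=> i; exact: lt_le_trans mpos (hm i).
have hxj : forall j, mu * x 0 j = \sum_k x 0 k * (e k j)%:R.
  move=> j; have := congr1 (fun M : 'M[R]_(1,n) => M 0 j) hx; rewrite !mxE => <-.
  by apply: eq_bigr => k _; rewrite /adjmx !mxE.
have mupos : 0 < mu.
  have h1 : x 0 i0 <= \sum_k x 0 k * (e k j0)%:R.
    rewrite (bigD1 i0) //= e0 mulr1 lerDl; apply: sumr_ge0 => k _.
    by apply: mulr_ge0; [exact: ltW | exact: ler0n].
  rewrite -hxj in h1.
  have := hpos j0; have := hpos i0; nra.
set N := [set j | e u j].
set S1 := \sum_(k in N) x 0 k.
set S2 := \sum_(k in N) x 0 k ^+ 2.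
have hA : mu * x 0 u = S1.
  rewrite hxj /S1 [RHS]big_mkcond /=; apply: eq_bigr => k _.
  by rewrite inE esym; case: (e u k); rewrite ?mulr1 ?mulr0.
have cardN : #|N| = delta by rewrite -du.
have hB : S1 ^+ 2 <= delta%:R * S2 by rewrite -cardN; exact: cs.
have dn : (delta <= n)%N.
  by rewrite -cardN -[X in (_ <= X)%N](card_ord n); exact: max_card.
set T := \sum_(k in [predC N]) x 0 k ^+ 2.
have hC : 1 = S2 + T by rewrite -hnorm (bigID (mem N)).
have hT : m ^+ 2 * (n%:R - delta%:R) <= T.
  have : \sum_(k in [predC N]) m ^+ 2 <= T.
    apply: ler_sum => k _.
    by have := hm k; nra.
  rewrite sumr_const.
  have hc : #|[predC N]| = (n - delta)%N by have := cardC N; rewrite card_ord cardN; lia.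
  by rewrite hc -[_ *+ _]mulr_natr natrB.
have hxu : m <= x 0 u := hm u.
have hm2 : m ^+ 2 <= x 0 u ^+ 2 by nra.
have hdn : delta%:R <= n%:R :> R by rewrite ler_nat.
have hd0 : 0 <= delta%:R :> R by exact: ler0n.
have key : m ^+ 2 * (mu ^+ 2 + delta%:R * (n%:R - delta%:R)) <= delta%:R.
  have h1 : mu ^+ 2 * m ^+ 2 <= mu ^+ 2 * x 0 u ^+ 2 by rewrite ler_pM2l ?exprn_gt0.
  have h2 : mu ^+ 2 * x 0 u ^+ 2 = S1 ^+ 2 by rewrite -hA; ring.
  have h3 : delta%:R * S2 <= delta%:R * (1 - m ^+ 2 * (n%:R - delta%:R)) :> R.
    by apply: ler_wpM2l => //; lra.
  nra.
have Dpos : 0 < mu ^+ 2 + delta%:R * (n%:R - delta%:R) :> R.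
  have : 0 < mu ^+ 2 by rewrite exprn_gt0.
  have : 0 <= delta%:R * (n%:R - delta%:R) :> R by apply: mulr_ge0 => //; lra.
  lra.
have -> : mu ^+ 2 + (delta * n)%:R - (delta ^ 2)%:R = mu ^+ 2 + delta%:R * (n%:R - delta%:R) :> R.
  by rewrite natrM natrX; ring.
rewrite -(ger0_norm (ltW mpos)) -sqrtr_sqr ler_sqrt; last first.
  by apply: divr_ge0 => //; exact: ltW.
by rewrite ler_pdivlMr.
Qed.
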